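(* Let $A,B:\mathcal K\to\mathcal K$ be linear maps such that $(A,B):\mathcal K\oplus\mathcal K\to\mathcal K$ has rank $\dim\mathcal K$ and $AB^\dagger$ is self-adjoint. Assume that $\det(A-\varkappa B)\neq0$ for some $\varkappa>0$. Then $\mathfrak S(i\varkappa;A,B)$ is self-adjoint. If $L\leq0$, then $\mathfrak S(i\varkappa;A,B)$ is a contraction for all $\varkappa>0$.
   Context: $\mathcal K$ is a finite-dimensional complex Hilbert space. For $\mathsf k\in\mathbb C$ with $\det(A+i\mathsf kB)\neq0$, $\mathfrak S(\mathsf k;A,B)=-(A+i\mathsf kB)^{-1}(A-i\mathsf kB)$; in particular $\mathfrak S(i\varkappa;A,B)=-(A-\varkappa B)^{-1}(A+\varkappa B)$. $P_{\ker B}$ denotes the orthogonal projection onto $\ker B$, $P^\perp_{\ker B}=\mathbb I-P_{\ker B}$, and $L=(B|_{\operatorname{Ran}B^\dagger})^{-1}AP^\perp_{\ker B}$, a self-adjoint operator on $\mathcal K$. *)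

(* Defs.v *)
(* finite-dimensional complex Hilbert space K = C^n (column vectors),
   C an arbitrary numClosedFieldType (e.g. complex numbers), linear maps = 'M[C]_n. *)
From Stdlib Require Import ClassicalEpsilon.
From mathcomp Require Import all_boot all_order all_algebra.
Set Implicit Arguments. Unset Strict Implicit. Unset Printing Implicit Defensive.
Import Order.TTheory GRing.Theory Num.Theory.
Local Open Scope ring_scope.
Local Open Scope sesquilinear_scope.

Section Defs.
Context {C : numClosedFieldType}.

(* inner product <u, v> = sum_i u_i * conj (v_i) on column vectors *)
Definition cdot n (u v : 'cV[C]_n) : C := dotmx u^T v^T.

Definition adj m n (M : 'M[C]_(m, n)) : 'M[C]_(n, m) := M ^t*.

Definition selfadj n (M : 'M[C]_n) : Prop := adj M = M.

Definition contraction n (S : 'M[C]_n) : Prop :=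
  forall v : 'cV[C]_n, cdot (S *m v) (S *m v) <= cdot v v.

Definition nonpos_op n (L : 'M[C]_n) : Prop :=
  forall v : 'cV[C]_n, cdot (L *m v) v <= 0.

Definition is_orth_proj_ker n (B P : 'M[C]_n) : Prop :=
  forall v : 'cV[C]_n, B *m (P *m v) = 0 /\
    (forall w : 'cV[C]_n, B *m w = 0 -> cdot (v - P *m v) w = 0).

Definition Pker n (B : 'M[C]_n) : 'M[C]_n :=
  epsilon (inhabits 0) (is_orth_proj_ker B).

Definition Pker_perp n (B : 'M[C]_n) : 'M[C]_n := 1%:M - Pker B.

(* L = (B|_{Ran B^dagger})^{-1} A P^perp_{ker B}: for every v, L v lies in
   Ran B^dagger and B (L v) = A P^perp v *)
Definition is_Lop n (A B L : 'M[C]_n) : Prop :=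
  forall v : 'cV[C]_n,
    (exists u : 'cV[C]_n, L *m v = adj B *m u) /\
    B *m (L *m v) = A *m (Pker_perp B *m v).

Definition Lop n (A B : 'M[C]_n) : 'M[C]_n :=
  epsilon (inhabits 0) (is_Lop A B).

Definition Smat n (k : C) (A B : 'M[C]_n) : 'M[C]_n :=
  - (invmx (A + ('i * k) *: B) *m (A - ('i * k) *: B)).

End Defs.

(* Main.v *)
Require Import Defs.
From mathcomp Require Import all_boot all_order all_algebra.
Import Order.TTheory GRing.Theory Num.Theory.
Local Open Scope ring_scope.
From Stdlib Require Import ClassicalEpsilon.
From mathcomp Require Import ring.
Set Implicit Arguments. Unset Strict Implicit. Unset Printing Implicit Defensive.
Local Open Scope sesquilinear_scope.

Section Aux.
Variable C : numClosedFieldType.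

Lemma cadjM m n p (X : 'M[C]_(m, n)) (Y : 'M[C]_(n, p)) : (X *m Y)^t* = Y^t* *m X^t*.
Proof. by rewrite trmx_mul map_mxM. Qed.
Lemma cadjD m n (X Y : 'M[C]_(m, n)) : (X + Y)^t* = X^t* + Y^t*.
Proof. by apply/matrixP => i j; rewrite !mxE rmorphD. Qed.
Lemma cadjN m n (X : 'M[C]_(m, n)) : (- X)^t* = - X^t*.
Proof. by apply/matrixP => i j; rewrite !mxE rmorphN. Qed.
Lemma cadjB m n (X Y : 'M[C]_(m, n)) : (X - Y)^t* = X^t* - Y^t*.
Proof. by rewrite cadjD cadjN. Qed.
Lemma cadjZ m n a (X : 'M[C]_(m, n)) : (a *: X)^t* = a^* *: X^t*.
Proof. by apply/matrixP => i j; rewrite !mxE rmorphM. Qed.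
Lemma cadjK m n (X : 'M[C]_(m, n)) : X^t*^t* = X.
Proof. exact: trmxCK. Qed.

Lemma cdotE n (u v : 'cV[C]_n) : cdot u v = (v^t* *m u) 0 0.
Proof.
rewrite /cdot dotmxE !mxE; apply: eq_bigr => i _; rewrite !mxE mulrC.
done.
Qed.

Lemma cdotC n (u v : 'cV[C]_n) : (cdot u v)^* = cdot v u.
Proof.
rewrite !cdotE !mxE rmorph_sum; apply: eq_bigr => i _; rewrite !mxE rmorphM /= conjCK mulrC.
done.
Qed.

Lemma cdot_ge0 n (u : 'cV[C]_n) : 0 <= cdot u u.
Proof. by rewrite cdotE mxE sumr_ge0 // => i _; rewrite !mxE mulrC mul_conjC_ge0. Qed.

Lemma cdot_eq0 n (u : 'cV[C]_n) : cdot u u = 0 -> u = 0.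
Proof.
rewrite cdotE mxE => /psumr_eq0P H.
have {}H : forall i, (u^t*) 0 i * u i 0 = 0.
  by move=> i; apply: H => // k _; rewrite !mxE mulrC mul_conjC_ge0.
apply/matrixP => i j; rewrite (ord1 j) mxE; apply/eqP.
by have := H i; rewrite !mxE mulrC => /eqP; rewrite mul_conjC_eq0.
Qed.

Lemma cdotMl n (M : 'M[C]_n) (u v : 'cV[C]_n) : cdot (M *m u) v = cdot u (M^t* *m v).
Proof. by rewrite !cdotE cadjM cadjK mulmxA. Qed.

Lemma cdotDl n (u w v : 'cV[C]_n) : cdot (u + w) v = cdot u v + cdot w v.
Proof. by rewrite !cdotE mulmxDr mxE. Qed.
Lemma cdotDr n (u w v : 'cV[C]_n) : cdot v (u + w) = cdot v u + cdot v w.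
Proof. by rewrite !cdotE cadjD mulmxDl mxE. Qed.
Lemma cdotNl n (u v : 'cV[C]_n) : cdot (- u) v = - cdot u v.
Proof. by rewrite !cdotE mulmxN mxE. Qed.
Lemma cdotNr n (u v : 'cV[C]_n) : cdot v (- u) = - cdot v u.
Proof. by rewrite !cdotE cadjN mulNmx mxE. Qed.
Lemma cdotBl n (u w v : 'cV[C]_n) : cdot (u - w) v = cdot u v - cdot w v.
Proof. by rewrite cdotDl cdotNl. Qed.
Lemma cdotBr n (u w v : 'cV[C]_n) : cdot v (u - w) = cdot v u - cdot v w.
Proof. by rewrite cdotDr cdotNr. Qed.
Lemma cdotZl n a (u v : 'cV[C]_n) : cdot (a *: u) v = a * cdot u v.
Proof. by rewrite !cdotE -scalemxAr mxE. Qed.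
Lemma cdotZr n a (u v : 'cV[C]_n) : cdot v (a *: u) = a^* * cdot v u.
Proof. by rewrite !cdotE cadjZ -scalemxAl mxE. Qed.

End Aux.

Local Notation "B ^!" :=
  (orthomx Num.Def.conjC (mx_of_hermitian (hermitian1mx _)) B) : matrix_set_scope.

Section Proj.
Variables (C : numClosedFieldType) (n : nat) (B : 'M[C]_n).

Let Kr := kermx B^T.
Let Q := proj_ortho Kr.
Let Bc := (B^t*)^T.

Lemma BcT : Bc^T = B^t*. Proof. by rewrite trmxK. Qed.
Lemma Bc_adj : Bc^t* = B^T.
Proof. by apply/matrixP => i j; rewrite !mxE conjCK. Qed.

Lemma BQ0 : B *m Q^T = 0.
Proof.
apply: trmx_inj; rewrite trmx_mul trmxK trmx0.
apply/sub_kermxP; rewrite -[Q]mul1mx; exact: proj_ortho_sub.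
Qed.

Lemma Bc_ortho : (Bc <= Kr^!)%MS.
Proof.
rewrite orthomx_sym; apply/orthomx1P; rewrite Bc_adj; exact: mulmx_ker.
Qed.

Lemma BcQ0 : Bc *m Q = 0.
Proof. exact: proj_ortho_0 Bc_ortho. Qed.

Lemma QadjB : Q^T *m B^t* = 0.
Proof. by apply: trmx_inj; rewrite trmx_mul trmxK -/Bc BcQ0 trmx0. Qed.

Lemma Kr_ortho_sub : (Kr^! <= Bc)%MS.
Proof.
have h1 : (Kr^! <= Bc^!^!)%MS.
  rewrite submx_ortho; apply/sub_kermxP; rewrite -Bc_adj; apply/orthomx1P.
  exact: submx_refl.
apply: submx_trans h1 _.
by have /eqmxP/andP[] := ortho_id Bc.
Qed.

Lemma Q_orth : is_orth_proj_ker B Q^T.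
Proof.
move=> v; split.
  by rewrite mulmxA BQ0 mul0mx.
move=> w Bw.
have hw : (w^T <= Kr)%MS.
  by apply/sub_kermxP; rewrite -trmx_mul Bw trmx0.
have hv : ((v - Q^T *m v)^T <= Kr^!)%MS.
  rewrite linearB /= trmx_mul trmxK; exact: proj_ortho_compl_sub.
have hv2 : ((v - Q^T *m v)^T <= (w^T)^!)%MS.
  apply: submx_trans hv _; by rewrite submx_ortho.
move/orthomx1P: hv2 => h.
by rewrite /cdot dotmxE h mxE.
Qed.

Lemma orth_proj_uniq (P1 P2 : 'M[C]_n) :
  is_orth_proj_ker B P1 -> is_orth_proj_ker B P2 -> P1 = P2.
Proof.
move=> H1 H2.
suff E : forall v : 'cV[C]_n, P1 *m v = P2 *m v.
  apply/matrixP => i j; have := E (delta_mx j (0 : 'I_1)).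
  move/matrixP/(_ i 0) => E'; rewrite !mxE in E'.
  rewrite (bigD1 j) //= [X in _ = X](bigD1 j) //= /delta_mx !mxE !eqxx !mulr1 in E'.
  rewrite !big1 ?addr0 // in E' => k /negbTE kj; by rewrite !mxE kj mulr0.
move=> v.
have [B1 O1] := H1 v; have [B2 O2] := H2 v.
have Bd : B *m (P1 *m v - P2 *m v) = 0 by rewrite mulmxBr B1 B2 subrr.
have e1 := O1 _ Bd; have e2 := O2 _ Bd.
have Ed : P1 *m v - P2 *m v = (v - P2 *m v) - (v - P1 *m v).
  by rewrite [in RHS]opprB [in RHS]addrC [in RHS]addrA [in RHS]subrK.
have : cdot (P1 *m v - P2 *m v) (P1 *m v - P2 *m v) = 0.
  by rewrite {1}Ed cdotBl e1 e2 subrr.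
move=> h; apply/eqP; rewrite -subr_eq0; apply/eqP.
exact: cdot_eq0.
Qed.

Lemma PkerE : Pker B = Q^T.
Proof.
apply: orth_proj_uniq; last exact: Q_orth.
rewrite /Pker; apply: epsilon_spec; exists Q^T; exact: Q_orth.
Qed.

Lemma Pperp_range : exists H : 'M[C]_n, Pker_perp B = B^t* *m H.
Proof.
have h := proj_ortho_compl_sub Kr (1%:M : 'M[C]_n); rewrite mul1mx in h.
have /submxP[G hG] := submx_trans h Kr_ortho_sub.
exists G^T; rewrite /Pker_perp PkerE.
have -> : 1%:M - Q^T = (1%:M - Q)^T by rewrite linearB /= trmx1.
by rewrite hG trmx_mul BcT.
Qed.

Lemma Pperp_adjB : Pker_perp B *m B^t* = B^t*.
Proof. by rewrite /Pker_perp PkerE mulmxBl mul1mx QadjB subr0. Qed.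

Lemma B_Pperp : B *m Pker_perp B = B.
Proof. by rewrite /Pker_perp PkerE mulmxBr mulmx1 BQ0 subr0. Qed.

End Proj.

Section Main.
Variables (C : numClosedFieldType) (n : nat) (A B : 'M[C]_n).
Hypothesis Hrank : \rank (row_mx A B) = n.
Hypothesis HS : A *m B^t* = B *m A^t*.

Lemma Lop_spec : is_Lop A B (Lop A B).
Proof.
rewrite /Lop; apply: epsilon_spec.
have [H hH] := Pperp_range B.
exists (Pker_perp B *m A^t* *m H) => v; split.
  by exists (H *m A^t* *m H *m v); rewrite hH !mulmxA.
by rewrite !mulmxA B_Pperp -HS hH !mulmxA.
Qed.

Lemma range_lemma (phi psi : 'cV[C]_n) : A *m phi + B *m psi = 0 ->
  exists u : 'cV[C]_n, phi = B^t* *m u /\ psi = - (A^t* *m u).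
Proof.
move=> Hz.
pose K := row_mx A B.
pose N := col_mx (B^t*) (- A^t*).
have KN : K *m N = 0 by rewrite mul_row_col mulmxN HS subrr.
have rN : \rank N^T = n.
  have -> : N^T = (row_mx B (- A)) ^ Num.Def.conjC.
    rewrite tr_col_mx map_row_mx; congr row_mx; apply/matrixP => i j; rewrite !mxE ?rmorphN //.
  rewrite mxrank_map; apply/eqP; rewrite eqn_leq rank_leq_row /=.
  rewrite -{1}Hrank.
  have <- : row_mx B (- A) *m block_mx (0 : 'M_n) 1%:M (- 1%:M) 0 = row_mx A B.
    by rewrite mul_row_block !mulmx0 mulmxN mulNmx opprK !mulmx1 add0r addr0.
  exact: mxrankM_maxl.
have sN : (N^T <= kermx K^T)%MS.
  by apply/sub_kermxP; rewrite -trmx_mul KN trmx0.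
have rK : \rank (kermx K^T) = n.
  by rewrite mxrank_ker mxrank_tr Hrank addnK.
have /andP[_ sK] : (N^T == kermx K^T)%MS.
  by rewrite -(mxrank_leqif_eq sN) rN rK.
have sz : ((col_mx phi psi)^T <= kermx K^T)%MS.
  by apply/sub_kermxP; rewrite -trmx_mul mul_row_col Hz trmx0.
have /submxP[w hw] := submx_trans sz sK.
exists w^T.
have : col_mx phi psi = N *m w^T by rewrite -[LHS]trmxK hw trmx_mul trmxK.
rewrite mul_col_mx mulNmx => /eq_col_mx[-> ->]; done.
Qed.

Lemma key_lemma (HL : nonpos_op (Lop A B)) (phi psi : 'cV[C]_n) :
  A *m phi + B *m psi = 0 -> 0 <= cdot phi psi.
Proof.
move/range_lemma => [u [-> ->]].
have [_ hL] := Lop_spec (B^t* *m u).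
have e1 : cdot (Lop A B *m (B^t* *m u)) (B^t* *m u) = (u^t* *m A *m B^t* *m u) 0 0.
  rewrite cdotE cadjM cadjK -mulmxA hL (mulmxA (Pker_perp B)) Pperp_adjB.
  by rewrite !mulmxA.
have e2 : cdot (B^t* *m u) (- (A^t* *m u)) = - (u^t* *m A *m B^t* *m u) 0 0.
  by rewrite cdotE cadjN cadjM cadjK mulNmx mxE !mulmxA.
rewrite e2 oppr_ge0 -e1; exact: HL.
Qed.

End Main.

Lemma zmod4 (V : zmodType) (a b c d : V) : a + b + (c - d) = a - d + (b + c).
Proof. by rewrite -!addrA; congr (_ + _); rewrite addrA addrC. Qed.

Lemma Sform (C : numClosedFieldType) n (A B : 'M[C]_n) k :
  Smat ('i * k) A B = - (invmx (A - k *: B) *m (A + k *: B)).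
Proof. by rewrite /Smat mulrA mulCii mulN1r !scaleNr opprK. Qed.

Unset Implicit Arguments.
Theorem corollary2p5 (C : numClosedFieldType) (n : nat) (A B : 'M[C]_n) (kappa0 : C) :
  \rank (row_mx A B) = n ->
  selfadj (A *m adj B) ->
  0 < kappa0 ->
  \det (A - kappa0 *: B) != 0 ->
  selfadj (Smat ('i * kappa0) A B) /\
  (nonpos_op (Lop A B) ->
   forall kappa : C, 0 < kappa ->
     \det (A - kappa *: B) != 0 /\ contraction (Smat ('i * kappa) A B)).
Proof.
move=> Hrank Hsa k0_gt0 det0.
have HS : A *m B^t* = B *m A^t*.
  by move: Hsa; rewrite /selfadj /adj cadjM cadjK => ->.
split.
  rewrite /selfadj /adj Sform.
  set M := A - kappa0 *: B; set N := A + kappa0 *: B.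
  have kc : kappa0^* = kappa0 by apply: geC0_conj; apply: ltW.
  have Mu : M \in unitmx by rewrite unitmxE unitfE.
  have Mtu : M^t* \in unitmx by rewrite map_unitmx unitmx_tr.
  have MN : M *m N^t* = N *m M^t*.
    rewrite /M /N cadjD cadjB !cadjZ kc mulmxBl mulmxBr !mulmxDl !mulmxDr.
    rewrite -!scalemxAl -!scalemxAr HS.
    done.
  rewrite cadjN cadjM.
  have -> : (invmx M)^t* = invmx (M^t*) by rewrite trmx_inv map_invmx.
  congr (- _).
  apply: (canLR (mulmxK Mtu)).
  by rewrite -mulmxA -MN mulKmx.
move=> HL kappa k_gt0.
have kc : kappa^* = kappa by apply: geC0_conj; apply: ltW.
have HSc : B *m A^t* = A *m B^t* by [].
have detk : \det (A - kappa *: B) != 0.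
  apply/negP; rewrite -det_tr => /det0P [v vnz vM].
  have My : (A - kappa *: B) *m v^T = 0.
    by apply: trmx_inj; rewrite trmx_mul trmxK vM trmx0.
  have := key_lemma Hrank HS HL (phi := v^T) (psi := - kappa *: v^T).
  have Hz : A *m v^T + B *m (- kappa *: v^T) = 0.
    by rewrite -My mulmxBl -scalemxAl -scalemxAr scaleNr.
  move=> /(_ Hz); rewrite cdotZr rmorphN /= kc mulNr oppr_ge0 pmulr_rle0 //.
  move=> hle; have h0 : cdot v^T v^T = 0 by apply/le_anti; rewrite hle cdot_ge0.
  have := cdot_eq0 h0 => /(congr1 trmx); rewrite trmxK trmx0 => v0.
  by move: vnz; rewrite v0 eqxx.
split => //.
rewrite /contraction Sform => v.
set M := A - kappa *: B; set N := A + kappa *: B.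
have Mu : M \in unitmx by rewrite unitmxE unitfE.
set y := (- (invmx M *m N)) *m v.
have My : M *m y = - (N *m v) by rewrite /y mulNmx mulmxN -mulmxA mulKVmx.
have Hz : A *m (y + v) + B *m (kappa *: (v - y)) = 0.
  have -> : A *m (y + v) + B *m (kappa *: (v - y)) = M *m y + N *m v.
    rewrite /M /N mulmxDr mulmxBl mulmxDl -!scalemxAl -scalemxAr mulmxBr scalerBr.
    exact: zmod4.
  by rewrite My addNr.
have := key_lemma Hrank HS HL Hz.
rewrite cdotZr kc pmulr_rge0 // cdotDl !cdotBr -(cdotC y v).
set a := cdot y v; set p := cdot y y; set q := cdot v v.
have p0 : 0 <= p := cdot_ge0 y.
have q0 : 0 <= q := cdot_ge0 v.
move=> hX.
have hc := geC0_conj hX.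
rewrite !rmorphD !rmorphN /= conjCK (geC0_conj p0) (geC0_conj q0) in hc.
have e : a - p + (q - a^*) = q - p.
  apply/eqP; rewrite -(eqr_pMn2r (isT : (0 < 2)%N)); apply/eqP.
  transitivity ((a^* - p + (q - a)) + (a - p + (q - a^*))); first by rewrite mulr2n hc.
  by rewrite mulr2n; ring.
by rewrite e subr_ge0 in hX.
Qed.
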